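(* Let $X$ be an affine variety over $\Bbbk$ and let $\mathcal E\subset\operatorname{End}(X)$ be a linear semigroup. Then: (1) for every $x\in X$ we have $\mathcal E(x)=M(x)$; (2) for every $x\in X$ the subset $\mathcal E(x)\subset X$ is closed and isomorphic to a vector space (an affine space); (3) $T_xM(x)=T_x\mathcal E(x)=\mathcal D_{\mathcal E}(x)$ for all $x\in X$. In particular, a closed subvariety $Y\subset X$ is $\mathcal D_{\mathcal E}$-invariant if and only if it is $\mathcal E$-stable, i.e. a union of $\mathcal E$-orbits.
   Context: $\Bbbk$ is an algebraically closed field of characteristic $0$. A vector field on an affine variety $X$ is a $\Bbbk$-derivation $\xi$ of $\mathcal O(X)$; its value $\xi(x)\in T_xX$ is the tangent vector $f\mapsto(\xi f)(x)$. For a set $\mathcal D$ of vector fields, a closed subvariety $Y\subset X$ is $\mathcal D$-invariant if $\xi(y)\in T_yY$ for all $y\in Y$, $\xi\in\mathcal D$; $M(x)$ denotes the smallest closed $\mathcal D$-invariant subvariety containing $x$, and $\mathcal D(x)=\{\xi(x)\mid\xi\in\mathcal D\}$. $\operatorname{End}(X)$, the semigroup of all morphisms $X\to X$ under composition, carries a natural structure of an affine ind-variety (an increasing union of closed affine subvarieties) making it an ind-semigroup. For a closed semi-subgroup $\mathcal E\subset\operatorname{End}(X)$ (containing $\mathrm{id}_X$) let $T_{\mathrm{id}}\mathcal E$ be its Zariski tangent space at $\mathrm{id}$ (direct limit of tangent spaces of the filtration); for $x\in X$ let $\mu_x\colon\mathcal E\to X$, $\phi\mapsto\phi(x)$, and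 for $A\in T_{\mathrm{id}}\mathcal E$ let $\xi_A$ be the vector field with $\xi_A(x)=(d\mu_x)_{\mathrm{id}}(A)$. Then $\mathcal D_{\mathcal E}:=\{\xi_A\mid A\in T_{\mathrm{id}}\mathcal E\}$, and $M(x)$ is taken with respect to $\mathcal D=\mathcal D_{\mathcal E}$. The orbit of $x$ is $\mathcal E(x)=\{\phi(x)\mid\phi\in\mathcal E\}$; $Y$ is $\mathcal E$-stable if $\phi(Y)\subset Y$ for all $\phi\in\mathcal E$. A semi-subgroup $\mathcal E\subset\operatorname{End}(X)$ is a linear semigroup if there is a closed embedding $X\hookrightarrow V$ into a finite-dimensional vector space such that the image of $\mathcal E$ in $\operatorname{Mor}(X,V)$ is a linear subspace. *)

(* Defs.v *)
From HB Require Import structures.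
From mathcomp Require Import all_boot all_order all_algebra.
From mathcomp Require Import mpoly.
Set Implicit Arguments. Unset Strict Implicit. Unset Printing Implicit Defensive.
Import Order.TTheory GRing.Theory.
Local Open Scope ring_scope.

Section Defs.
Variable K : closedFieldType.

Definition pt (n : nat) := 'I_n -> K.

Definition zclosed (N : nat) (S : pt N -> Prop) : Prop :=
  exists P : {mpoly K[N]} -> Prop,
    forall x, S x <-> (forall p, P p -> p.@[x] = 0).

Definition diffp (N : nat) (p : {mpoly K[N]}) (s v : pt N) : K :=
  \sum_(i < N) (mderiv i p).@[s] * v i.

Definition tangent (N : nat) (S : pt N -> Prop) (s : pt N) : pt N -> Prop :=
  fun v => forall p : {mpoly K[N]}, (forall y, S y -> p.@[y] = 0) -> diffp p s v = 0.

Definition pm_eval (n m : nat) (P : 'I_m -> {mpoly K[n]}) (x : pt n) : pt m :=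
  fun j => (P j).@[x].

Definition is_morphism (n m : nat) (X : pt n -> Prop) (f : pt n -> pt m) : Prop :=
  exists P : 'I_m -> {mpoly K[n]}, forall x, X x -> f x = pm_eval P x.

Definition subvar (n : nat) (X Y : pt n -> Prop) : Prop :=
  zclosed Y /\ forall y, Y y -> X y.

(* Coordinates on the finite-dimensional space of n-tuples of polynomials of
   degree <= d in n variables: coefficient of monomial m in component i. *)
Definition coordIdx (n d : nat) : finType := ('I_n * 'X_{1..n < d.+1})%type.
Definition cdim (n d : nat) : nat := #|{: coordIdx n d}|.

Definition evC (n d : nat) (c : pt (cdim n d)) (x : pt n) : pt n :=
  fun i => \sum_(m : 'X_{1..n < d.+1})
             c (enum_rank ((i, m) : coordIdx n d)) * \prod_(j < n) x j ^+ (m j).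

(* elements of End(X) are represented by maps K^n -> K^n, only their
   restrictions to X matter.  The (lifted) d-th filtration piece of E:
   coefficient vectors of degree <= d polynomial tuples inducing an element of E. *)
Definition Etilde (n : nat) (X : pt n -> Prop) (E : (pt n -> pt n) -> Prop) (d : nat)
  : pt (cdim n d) -> Prop :=
  fun c => exists f, E f /\ forall y, X y -> evC c y = f y.

Definition End_semisubgroup (n : nat) (X : pt n -> Prop) (E : (pt n -> pt n) -> Prop) : Prop :=
  (forall f, E f -> (forall x, X x -> X (f x)) /\ is_morphism X f) /\
  E (fun x => x) /\
  (forall f g, E f -> E g -> E (fun x => f (g x))).

Definition End_closed (n : nat) (X : pt n -> Prop) (E : (pt n -> pt n) -> Prop) : Prop :=
  forall d, zclosed (@Etilde n X E d).

(* E is a linear semigroup: for some closed embedding phi : X -> K^m, the set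
   { phi o f | f in E } is a linear subspace of Mor(X, K^m). *)
Definition linear_semigroup (n : nat) (X : pt n -> Prop) (E : (pt n -> pt n) -> Prop) : Prop :=
  exists (m : nat) (phi : 'I_m -> {mpoly K[n]}) (psi : 'I_n -> {mpoly K[m]}),
    zclosed (fun z => exists x, X x /\ z = pm_eval phi x) /\
    (forall x, X x -> pm_eval psi (pm_eval phi x) = x) /\
    (forall (a b : K) f g, E f -> E g ->
       exists h, E h /\ forall x, X x ->
         pm_eval phi (h x) = fun j => a * pm_eval phi (f x) j + b * pm_eval phi (g x) j).

(* D_E(x) = { xi_A(x) | A in T_id E } with xi_A(x) = (d mu_x)_id (A);
   T_id E is the direct limit of the tangent spaces at id of the filtration
   pieces, computed in the lifted coordinates, where mu_x is c |-> evC c x. *)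
Definition DE (n : nat) (X : pt n -> Prop) (E : (pt n -> pt n) -> Prop) (x : pt n)
  : pt n -> Prop :=
  fun v => exists (d : nat) (iota c : pt (cdim n d)),
    (forall y, X y -> evC iota y = y) /\
    tangent (@Etilde n X E d) iota c /\ v = evC c x.

Definition Dinvariant (n : nat) (D : pt n -> pt n -> Prop) (Y : pt n -> Prop) : Prop :=
  forall y, Y y -> forall v, D y v -> tangent Y y v.

Definition IsM (n : nat) (X : pt n -> Prop) (D : pt n -> pt n -> Prop) (x : pt n)
  (M : pt n -> Prop) : Prop :=
  subvar X M /\ Dinvariant D M /\ M x /\
  forall Y, subvar X Y -> Dinvariant D Y -> Y x -> forall y, M y -> Y y.

Definition Eorbit (n : nat) (E : (pt n -> pt n) -> Prop) (x : pt n) : pt n -> Prop :=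
  fun y => exists f, E f /\ y = f x.

Definition Estable (n : nat) (E : (pt n -> pt n) -> Prop) (Y : pt n -> Prop) : Prop :=
  forall f, E f -> forall y, Y y -> Y (f y).

Definition isAffineSpace (n : nat) (S : pt n -> Prop) : Prop :=
  exists (r : nat) (alpha : 'I_r -> {mpoly K[n]}) (beta : 'I_n -> {mpoly K[r]}),
    (forall t, S (pm_eval beta t)) /\
    (forall t, pm_eval alpha (pm_eval beta t) = t) /\
    (forall y, S y -> pm_eval beta (pm_eval alpha y) = y).

End Defs.

(* Main.v *)
Require Import Defs.
From HB Require Import structures.
From mathcomp Require Import all_boot all_order all_algebra.
From mathcomp Require Import mpoly.
From mathcomp Require Import ring.
From Stdlib Require Import Classical FunctionalExtensionality.
Local Open Scope ring_scope.

Module Aux.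
Set Implicit Arguments. Unset Strict Implicit. Unset Printing Implicit Defensive.
Import Order.TTheory GRing.Theory.

Section Infra.
Variable K : closedFieldType.

Definition pev (N : nat) (G : 'I_N -> {poly K}) (p : {mpoly K[N]}) : {poly K} :=
  mmap (@polyC K) G p.

Lemma pevM N (G : 'I_N -> {poly K}) p q : pev G (p * q) = pev G p * pev G q.
Proof. by rewrite /pev rmorphM. Qed.
Lemma pevD N (G : 'I_N -> {poly K}) p q : pev G (p + q) = pev G p + pev G q.
Proof. by rewrite /pev rmorphD. Qed.
Lemma pevC N (G : 'I_N -> {poly K}) c : pev G c%:MP = c%:P.
Proof. by rewrite /pev mmapC. Qed.
Lemma pevX N (G : 'I_N -> {poly K}) i : pev G 'X_i = G i.
Proof. by rewrite /pev mmapX mmap1U. Qed.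

Definition chainP N (G : 'I_N -> {poly K}) p :=
  (pev G p)^`() = \sum_(i < N) pev G (mderiv i p) * (G i)^`().

Lemma chain_rule N (G : 'I_N -> {poly K}) p : chainP G p.
Proof.
have hC c : chainP G c%:MP.
  by rewrite /chainP pevC derivC big1 // => i _; rewrite mderivC /pev mmap0 mul0r.
have hX j : chainP G 'X_j.
  rewrite /chainP pevX (bigD1 j) //= big1 ?addr0.
    by rewrite mderivX mnm1E eqxx -{1}[U_(j)%MM]add0m addmK mpolyX0 scale1r /pev rmorph1 mul1r.
  move=> i /negPf hij; rewrite mderivX mnm1E.
  by rewrite eq_sym hij scale0r /pev mmap0 mul0r.
have hD p1 p2 : chainP G p1 -> chainP G p2 -> chainP G (p1 + p2).
  rewrite /chainP pevD derivD => -> ->; rewrite -big_split /=.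
  by apply: eq_bigr => i _; rewrite mderivD pevD mulrDl.
have hM p1 p2 : chainP G p1 -> chainP G p2 -> chainP G (p1 * p2).
  rewrite /chainP pevM derivM => -> ->.
  rewrite mulr_suml mulr_sumr -big_split /=.
  apply: eq_bigr => i _; rewrite mderivM pevD !pevM mulrDl.
  ring.
have h0 : chainP G 0 by rewrite -(mpolyC0 N K); apply: hC.
rewrite [p]mpolyE; apply: (big_ind (chainP G)) => //.
move=> m _; rewrite -mul_mpolyC; apply hM => //.
rewrite mpolyXE_id; apply: (big_ind (chainP G)) => //; first by rewrite -(mpolyC1 N K); apply hC.
move=> i _; move: (m i) => k; elim: k => [|k IH]; first by rewrite expr0 -(mpolyC1 N K); apply hC.
by rewrite exprS; apply hM.
Qed.

Lemma mmap_morph (N : nat) (R S S' : comRingType) (f : R -> S) (h : 'I_N -> S)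
  (rho : {rmorphism S -> S'}) (p : {mpoly R[N]}) :
  rho (mmap f h p) = mmap (fun c => rho (f c)) (fun i => rho (h i)) p.
Proof.
rewrite /mmap rmorph_sum; apply: eq_bigr => m _.
by rewrite rmorphM /mmap1 rmorph_prod; congr (_ * _); apply: eq_bigr => i _; rewrite rmorphXn.
Qed.

Lemma mmap_ext (N : nat) (R S : ringType) (f1 f2 : R -> S) (h1 h2 : 'I_N -> S) p :
  f1 =1 f2 -> h1 =1 h2 -> mmap f1 h1 p = mmap f2 h2 p.
Proof.
move=> ef eh; rewrite /mmap; apply: eq_bigr => m _; rewrite ef; congr (_ * _).
exact: mmap1_eq.
Qed.

Lemma pev_horner N (G : 'I_N -> {poly K}) p t :
  (pev G p).[t] = p.@[fun i => (G i).[t]].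
Proof.
rewrite /pev -horner_evalE mmap_morph /meval; apply: mmap_ext => // c.
by rewrite /= horner_evalE hornerC.
Qed.

Definition lin N (s v : pt K N) : 'I_N -> {poly K} := fun i => (s i)%:P + (v i)%:P * 'X.

Lemma lin_horner N (s v : pt K N) t i : (lin s v i).[t] = s i + v i * t.
Proof. by rewrite /lin hornerD hornerC hornerMX hornerC. Qed.

Lemma lin_deriv N (s v : pt K N) i : (lin s v i)^`() = (v i)%:P.
Proof. by rewrite /lin derivD derivC add0r derivM derivC derivX mul0r add0r mulr1. Qed.

Lemma diffp_lin N (p : {mpoly K[N]}) s v :
  diffp p s v = ((pev (lin s v) p)^`()).[0].
Proof.
rewrite chain_rule /diffp horner_sum; apply: eq_bigr => i _.
rewrite hornerM lin_deriv hornerC pev_horner; congr (_ * _).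
by apply: meval_eq => j; rewrite lin_horner mulr0 addr0.
Qed.

Hypothesis hK : [pchar K] =i pred0.

Lemma natr_inj : injective (fun k : nat => k%:R : K).
Proof.
move=> a b /= eab; apply/eqP; move/pcharf0P: hK => h.
wlog lab: a b eab / (a <= b)%N.
  move=> W; case: (leqP a b) => [|/ltnW] l; first exact: W.
  by rewrite eq_sym; apply: W.
have: ((b - a)%N%:R == 0 :> K) by rewrite natrB // eab subrr.
by rewrite h subn_eq0 eqn_leq lab => ->.
Qed.

Lemma poly_all0 (P : {poly K}) : (forall t, P.[t] = 0) -> P = 0.
Proof.
move=> h; apply: (@roots_geq_poly_eq0 _ P [seq k%:R | k <- iota 0 (size P)]).
- by apply/allP => x /mapP [k _ ->]; rewrite /root h.
- rewrite map_inj_uniq ?iota_uniq //; exact: natr_inj.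
- by rewrite size_map size_iota.
Qed.

Lemma curve_tangent N (S : pt K N -> Prop) (G : 'I_N -> {poly K}) :
  (forall t, S (fun i => (G i).[t])) ->
  tangent S (fun i => (G i).[0]) (fun i => (G i)^`().[0]).
Proof.
move=> hS p hp.
have h0 : pev G p = 0 by apply: poly_all0 => t; rewrite pev_horner; apply: hp.
have E := congr1 (fun q => (q^`()).[0]) h0.
rewrite /= chain_rule deriv0 horner0 horner_sum in E.
rewrite /diffp; etransitivity; last exact: E.
by apply: eq_bigr => i _; rewrite hornerM pev_horner.
Qed.

End Infra.

Section Infra2.
Variable K : closedFieldType.

Lemma lin0 N (s v : pt K N) i : (lin s v i).[0] = s i.
Proof. by rewrite lin_horner mulr0 addr0. Qed.

Lemma meval_comp N M (F : 'I_M -> {mpoly K[N]}) (q : {mpoly K[M]}) s :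
  (mmap (@mpolyC N K) F q).@[s] = q.@[pm_eval F s].
Proof.
rewrite (mmap_morph _ _ (meval s)); apply: mmap_ext => // c.
by rewrite /= mevalC.
Qed.

Lemma pev_comp N M (G : 'I_N -> {poly K}) (F : 'I_M -> {mpoly K[N]}) (q : {mpoly K[M]}) :
  pev G (mmap (@mpolyC N K) F q) = pev (fun j => pev G (F j)) q.
Proof.
rewrite {1}/pev (mmap_morph _ _ (mmap (@polyC K) G)); apply: mmap_ext => // c.
by rewrite /= mmapC.
Qed.

Lemma diffp_comp N M (F : 'I_M -> {mpoly K[N]}) (q : {mpoly K[M]}) s v :
  diffp (mmap (@mpolyC N K) F q) s v = diffp q (pm_eval F s) (fun j => diffp (F j) s v).
Proof.
rewrite diffp_lin pev_comp chain_rule horner_sum /diffp; apply: eq_bigr => j _.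
rewrite hornerM pev_horner -diffp_lin; congr (_ * _); apply: meval_eq => k.
by rewrite pev_horner /pm_eval; apply: meval_eq => i; rewrite lin0.
Qed.

Lemma diffpD N (p q : {mpoly K[N]}) s v : diffp (p + q) s v = diffp p s v + diffp q s v.
Proof. by rewrite /diffp -big_split; apply: eq_bigr => i _; rewrite mderivD mevalD mulrDl. Qed.
Lemma diffpN N (p : {mpoly K[N]}) s v : diffp (- p) s v = - diffp p s v.
Proof. by rewrite /diffp -sumrN; apply: eq_bigr => i _; rewrite mderivN mevalN mulNr. Qed.
Lemma diffpB N (p q : {mpoly K[N]}) s v : diffp (p - q) s v = diffp p s v - diffp q s v.
Proof. by rewrite diffpD diffpN. Qed.
Lemma diffpZ N (p : {mpoly K[N]}) c s v : diffp (c *: p) s v = c * diffp p s v.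
Proof. by rewrite /diffp mulr_sumr; apply: eq_bigr => i _; rewrite mderivZ mevalZ mulrA. Qed.
Lemma diffp_sum N (I : Type) (r : seq I) (F : I -> {mpoly K[N]}) s v :
  diffp (\sum_(i <- r) F i) s v = \sum_(i <- r) diffp (F i) s v.
Proof.
elim: r => [|a r IH]; first by rewrite !big_nil /diffp big1 // => i _; rewrite mderiv0 meval0 mul0r.
by rewrite !big_cons diffpD IH.
Qed.
Lemma diffpX N (i : 'I_N) (s v : pt K N) : diffp 'X_i s v = v i.
Proof.
rewrite /diffp (bigD1 i) //= big1 ?addr0.
  by rewrite mderivX mnm1E eqxx -{1}[U_(i)%MM]add0m addmK mpolyX0 scale1r meval1 mul1r.
move=> j /negPf hij; rewrite mderivX mnm1E.
by rewrite eq_sym hij scale0r meval0 mul0r.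
Qed.
Lemma diffpC N c (s v : pt K N) : diffp c%:MP s v = 0.
Proof. by rewrite /diffp big1 // => i _; rewrite mderivC meval0 mul0r. Qed.
Lemma diffpM N (p q : {mpoly K[N]}) s v :
  diffp (p * q) s v = diffp p s v * q.@[s] + p.@[s] * diffp q s v.
Proof.
rewrite /diffp mulr_suml mulr_sumr -big_split; apply: eq_bigr => i _ /=.
rewrite mderivM mevalD !mevalM; ring.
Qed.

Lemma tangent_ext N (S : pt K N -> Prop) s1 s2 v1 v2 :
  s1 =1 s2 -> v1 =1 v2 -> tangent S s1 v1 -> tangent S s2 v2.
Proof.
move=> es ev h p hp; rewrite -(h p hp) /diffp; apply: eq_bigr => i _.
by rewrite ev; congr (_ * _); apply: meval_eq => j; rewrite es.
Qed.

Lemma tangent_mono N (S1 S2 : pt K N -> Prop) s v :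
  (forall y, S1 y -> S2 y) -> tangent S1 s v -> tangent S2 s v.
Proof. by move=> h t p hp; apply: t => y /h; apply: hp. Qed.

End Infra2.

Section Infra3.
Variable K : closedFieldType.
Lemma diffp_ext N (p : {mpoly K[N]}) s1 s2 v1 v2 :
  s1 =1 s2 -> v1 =1 v2 -> diffp p s1 v1 = diffp p s2 v2.
Proof.
move=> es ev; rewrite /diffp; apply: eq_bigr => i _.
by rewrite ev; congr (_ * _); apply: meval_eq => j; rewrite es.
Qed.
Lemma meval_sumZ N M (c : 'I_M -> K) (F : 'I_M -> {mpoly K[N]}) s :
  (\sum_(k < M) c k *: F k).@[s] = \sum_(k < M) c k * (F k).@[s].
Proof.
rewrite raddf_sum; apply: eq_bigr => k _; exact: mevalZ.
Qed.
Lemma diffp_sumZ N M (c : 'I_M -> K) (F : 'I_M -> {mpoly K[N]}) s v :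
  diffp (\sum_(k < M) c k *: F k) s v = \sum_(k < M) c k * diffp (F k) s v.
Proof. by rewrite diffp_sum; apply: eq_bigr => k _; rewrite diffpZ. Qed.
End Infra3.

Section Infra4.
Variable K : closedFieldType.
Lemma pev_deriv0 N (G : 'I_N -> {poly K}) p :
  ((pev G p)^`()).[0] = diffp p (fun i => (G i).[0]) (fun i => (G i)^`().[0]).
Proof.
rewrite chain_rule horner_sum /diffp; apply: eq_bigr => i _.
by rewrite hornerM pev_horner.
Qed.
Lemma sum_Forall0 (T : Type) (s : seq T) (F : T -> K) :
  List.Forall (fun a => F a = 0) s -> \sum_(a <- s) F a = 0.
Proof. by elim=> [|a s' ha _ IH]; rewrite ?big_nil ?big_cons ?ha ?IH ?addr0. Qed.
End Infra4.

Section LA.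
Variable K : closedFieldType.

Definition rv m (z : pt K m) : 'rV[K]_m := \row_j z j.

Lemma subspace_mx m (W : pt K m -> Prop) :
  W (fun _ => 0) ->
  (forall a b z1 z2, W z1 -> W z2 -> W (fun j => a * z1 j + b * z2 j)) ->
  exists r (B : 'M[K]_(r, m)) (C : 'M[K]_m), row_free B /\
    (forall z, W z <-> exists t : 'rV_r, rv z = t *m B) /\
    (forall z, W z <-> rv z *m C = 0).
Proof.
move=> W0 Wl.
pose Wr (u : 'rV[K]_m) := W (fun j => u 0 j).
have WrE z : Wr (rv z) <-> W z.
  by rewrite /Wr; have -> : (fun j => rv z 0 j) = z by apply: functional_extensionality => j; rewrite mxE.
have Wrl a b u1 u2 : Wr u1 -> Wr u2 -> Wr (a *: u1 + b *: u2).
  move=> h1 h2; have := Wl a b _ _ h1 h2; rewrite /Wr.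
  by have -> : (fun j => (a *: u1 + b *: u2) 0 j) = (fun j => a * u1 0 j + b * u2 0 j)
    by apply: functional_extensionality => j; rewrite !mxE.
have key : forall d (A : 'M[K]_m), (m - \rank A <= d)%N -> (forall u, (u <= A)%MS -> Wr u) ->
    exists A' : 'M[K]_m, (forall u, (u <= A')%MS -> Wr u) /\ (forall u, Wr u -> (u <= A')%MS).
  elim=> [|d IH] A hd hA;
    (case: (classic (forall u, Wr u -> (u <= A)%MS)) => [hall|hno]; first by exists A);
    (have [u [Wu nuA]] : exists u, Wr u /\ ~~ (u <= A)%MS by
      apply: NNPP => hh; apply: hno => u Wu; apply: NNPP => hn; apply: hh; exists u; split => //; apply/negP);
    have ltA : (A < (A + u)%MS)%MS by
      rewrite ltmxE addsmxSl /=; apply/negP => hs; move/negP: nuA; apply; exact: submx_trans (addsmxSr A u) hs.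
  - have := rank_ltmx ltA; have := rank_leq_col (A + u)%MS; move: hd; rewrite leqn0 subn_eq0.
    by move=> h1 h2 h3; have := leq_ltn_trans h1 h3; rewrite ltnNge h2.
  - apply: (IH (A + u)%MS).
      have := rank_ltmx ltA; move: hd; have := rank_leq_col (A + u)%MS.
      move=> h1 h2 h3. apply: leq_trans (_ : m - \rank A - 1 <= d)%N; last by rewrite leq_subLR add1n.
      by rewrite -subnDA addn1 leq_sub2l.
    move=> v /sub_addsmxP [[v1 v2] /= ->].
    have e2 : v2 *m u = v2 0 0 *: u by rewrite {1}[v2]mx11_scalar mul_scalar_mx.
    rewrite e2 -[v1 *m A]scale1r; apply: Wrl => //; apply: hA; exact: submxMl.
have h0 : forall u, (u <= (0 : 'M[K]_m))%MS -> Wr u.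
  move=> u; rewrite submx0 => /eqP ->; rewrite /Wr.
  by have -> : (fun j => (0 : 'rV[K]_m) 0 j) = (fun _ => 0) by apply: functional_extensionality => j; rewrite mxE.
have [A [hA1 hA2]] := key m 0 (leq_subr _ _) h0.
have hAW z : W z <-> (rv z <= A)%MS.
  rewrite -WrE; split; [exact: hA2 | exact: hA1].
exists (\rank A), (row_base A), (cokermx A); split; first exact: row_base_free.
split=> z; rewrite hAW.
  rewrite -(eq_row_base A); split; [by case/submxP => t ->; exists t | by case=> t ->; exact: submxMl].
by rewrite submxE; split => [/eqP|->].
Qed.
End LA.

Section Main.
Variable K : closedFieldType.
Hypothesis hK : [pchar K] =i pred0.
Variables (n : nat) (X : pt K n -> Prop) (E : (pt K n -> pt K n) -> Prop).
Hypothesis hE : End_semisubgroup X E.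
Variables (m : nat) (phi : 'I_m -> {mpoly K[n]}) (psi : 'I_n -> {mpoly K[m]}).
Hypothesis hpsiphi : forall x, X x -> pm_eval psi (pm_eval phi x) = x.
Hypothesis hlin : forall (a b : K) f g, E f -> E g ->
       exists h, E h /\ forall x, X x ->
         pm_eval phi (h x) = fun j => a * pm_eval phi (f x) j + b * pm_eval phi (g x) j.

Local Notation Phi := (pm_eval phi).
Local Notation Psi := (pm_eval psi).

Definition W (y : pt K n) (z : pt K m) := exists f, E f /\ z = Phi (f y).

Lemma EX f : E f -> forall x, X x -> X (f x).
Proof. by case: hE => h _ Ef; case: (h f Ef). Qed.
Lemma Emor f : E f -> is_morphism X f.
Proof. by case: hE => h _ Ef; case: (h f Ef). Qed.
Lemma Eid : E (fun x => x).
Proof. by case: hE => _ []. Qed.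
Lemma Ecomp f g : E f -> E g -> E (fun x => f (g x)).
Proof. by case: hE => _ [] _; apply. Qed.

Lemma W_lin y a b z1 z2 : X y -> W y z1 -> W y z2 -> W y (fun j => a * z1 j + b * z2 j).
Proof.
move=> Xy [f [Ef ->]] [g [Eg ->]]; have [h [Eh hh]] := hlin a b Ef Eg.
by exists h; split => //; rewrite hh.
Qed.

Lemma W_self y : W y (Phi y).
Proof. by exists (fun x => x); split => //; exact: Eid. Qed.

Lemma W_Psi y z : X y -> W y z -> Eorbit E y (Psi z) /\ Phi (Psi z) = z.
Proof.
move=> Xy [f [Ef ->]]; rewrite hpsiphi; last exact: EX.
by split => //; exists f.
Qed.

Lemma W_sub h y z : E h -> W (h y) z -> W y z.
Proof. by move=> Eh [f [Ef ->]]; exists (fun x => f (h x)); split => //; exact: Ecomp. Qed.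

Lemma orbit_W x y : X x -> (Eorbit E x y <-> X y /\ W x (Phi y)).
Proof.
move=> Xx; split.
  by case=> f [Ef ->]; split; [exact: EX | exists f].
case=> Xy hW; have [[f [Ef e]] _] := W_Psi Xx hW.
by exists f; split => //; rewrite -e hpsiphi.
Qed.

Lemma orbit_sub x y z : Eorbit E x y -> Eorbit E y z -> Eorbit E x z.
Proof. by case=> f [Ef ->] [g [Eg ->]]; exists (fun u => g (f u)); split => //; exact: Ecomp. Qed.

Lemma orbit_X x y : X x -> Eorbit E x y -> X y.
Proof. by move=> Xx [f [Ef ->]]; exact: EX. Qed.

Lemma W0 y : X y -> W y (fun _ => 0).
Proof.
move=> Xy; have := W_lin 0 0 Xy (W_self y) (W_self y).
by have -> : (fun j => 0 * Phi y j + 0 * Phi y j) = (fun _ : 'I_m => 0 : K)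
  by apply: functional_extensionality => j; rewrite !mul0r addr0.
Qed.

Lemma W_mx y : X y -> exists r (B : 'M[K]_(r, m)) (C : 'M[K]_m), row_free B /\
    (forall z, W y z <-> exists t : 'rV_r, rv z = t *m B) /\
    (forall z, W y z <-> rv z *m C = 0).
Proof. move=> Xy; apply: subspace_mx; [exact: W0 | move=> a b z1 z2; exact: W_lin]. Qed.


Lemma psiphi_i y i : X y -> (psi i).@[Phi y] = y i.
Proof. by move=> Xy; have := congr1 (fun f => f i) (hpsiphi Xy). Qed.

Definition dPsi (z : pt K m) (u : pt K m) : pt K n := fun i => diffp (psi i) z u.
Definition dPhi (y : pt K n) (v : pt K n) : pt K m := fun j => diffp (phi j) y v.

Lemma rvC_entry (z : pt K m) (C : 'M[K]_m) j :
  (rv z *m C) 0 j = \sum_(k < m) C k j * z k.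
Proof. by rewrite !mxE; apply: eq_bigr => k _; rewrite mxE mulrC. Qed.

Lemma rvC0 (z : pt K m) (C : 'M[K]_m) :
  rv z *m C = 0 <-> forall j, \sum_(k < m) C k j * z k = 0.
Proof.
split=> [h j|h]; first by rewrite -rvC_entry h mxE.
by apply/matrixP => i j; rewrite ord1 rvC_entry h mxE.
Qed.

Lemma T_orb_sub x v : X x -> tangent (Eorbit E x) x v ->
  W x (dPhi x v) /\ forall i, v i = dPsi (Phi x) (dPhi x v) i.
Proof.
move=> Xx hT; have [r [B [C [_ [_ hC]]]]] := W_mx Xx; split.
  apply/hC/rvC0 => j.
  have := hT (\sum_(k < m) C k j *: phi k); rewrite diffp_sumZ; apply.
  move=> y /(orbit_W y Xx) [Xy /hC /rvC0 /(_ j)].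
  by rewrite meval_sumZ.
move=> i; apply/eqP; rewrite eq_sym -subr_eq0; apply/eqP.
have := hT (mmap (@mpolyC n K) phi (psi i) - 'X_i).
rewrite diffpB diffp_comp diffpX; apply.
move=> y /(orbit_X Xx) Xy; rewrite mevalB meval_comp mevalXU.
by rewrite (psiphi_i i Xy) subrr.
Qed.

Lemma dPsi_T x u : X x -> W x u -> tangent (Eorbit E x) x (dPsi (Phi x) u).
Proof.
move=> Xx Wu.
pose G i := pev (lin (Phi x) u) (psi i).
have hG : forall t, Eorbit E x (fun i => (G i).[t]).
  move=> t; have Wz := W_lin 1 t Xx (W_self x) Wu.
  have [ho _] := W_Psi Xx Wz.
  have -> : (fun i => (G i).[t]) = Psi (fun j => 1 * Phi x j + t * u j); last exact: ho.
  apply: functional_extensionality => i; rewrite /G pev_horner /pm_eval; apply: meval_eq => j.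
  by rewrite lin_horner mul1r mulrC.
apply: tangent_ext (curve_tangent hK hG).
  move=> i; rewrite /G pev_horner -(psiphi_i i Xx).
  by apply: meval_eq => j; rewrite lin0.
by move=> i; rewrite /G -diffp_lin.
Qed.

Lemma D_T x v : X x -> DE X E x v -> tangent (Eorbit E x) x v.
Proof.
move=> Xx [d [iota [c [hiota [hT ->]]]]] q hq.
pose l := fun i : 'I_n => \sum_(mm : 'X_{1..n < d.+1})
   (\prod_(j < n) x j ^+ (mm j)) *: ('X_(enum_rank ((i, mm) : coordIdx n d)) : {mpoly K[cdim n d]}).
have hl c' i : (l i).@[c'] = evC c' x i.
  rewrite /l raddf_sum /evC; apply: eq_bigr => mm _.
  by rewrite /= mevalZ mevalXU mulrC.
have hdl s w i : diffp (l i) s w = evC w x i.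
  rewrite /l diffp_sum /evC; apply: eq_bigr => mm _.
  by rewrite diffpZ diffpX mulrC.
have := hT (mmap (@mpolyC _ K) l q).
rewrite diffp_comp => h.
have <- : diffp q (pm_eval l iota) (fun i => diffp (l i) iota c) = diffp q x (evC c x).
  apply: diffp_ext => i; first by rewrite /pm_eval hl hiota.
  by rewrite hdl.
apply: h => c' [f [Ef hf]].
rewrite meval_comp.
have -> : q.@[pm_eval l c'] = q.@[f x].
  apply: meval_eq => i; rewrite /pm_eval hl hf //.
by apply: hq; exists f.
Qed.


Lemma meval_bound (p : {mpoly K[n]}) (y : pt K n) b : (msize p <= b)%N ->
  p.@[y] = \sum_(mm : 'X_{1..n < b}) p@_mm * \prod_(j < n) y j ^+ (mm j).
Proof.
move=> hb; rewrite {1}(mpolywE hb) raddf_sum; apply: eq_bigr => mm _.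
by rewrite /= mevalZ mevalX.
Qed.

Lemma dPsi_D x u : X x -> W x u -> DE X E x (dPsi (Phi x) u).
Proof.
move=> Xx [g [Eg ->]].
have [Gp hGp] := Emor Eg.
pose Th : 'I_m -> {poly {mpoly K[n]}} := fun j =>
  (phi j)%:P + (mmap (@mpolyC n K) Gp (phi j))%:P * 'X.
pose Ps : 'I_n -> {poly {mpoly K[n]}} := fun i =>
  mmap (fun c => (c%:MP_[n])%:P) Th (psi i).
have key y i : map_poly (meval y) (Ps i) = pev (lin (Phi y) (Phi (pm_eval Gp y))) (psi i).
  rewrite /Ps (mmap_morph _ _ (map_poly (meval y))) /pev; apply: mmap_ext => [c|j].
    by rewrite /= map_polyC; congr (_%:P); exact: mevalC.
  rewrite /Th /lin /= rmorphD rmorphM /= !map_polyC map_polyX.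
  by rewrite -[mpoly_meval__canonical__Algebra_Additive y (mmap _ _ _)]/(meval y _) meval_comp.
pose d := \max_(i < n) \max_(k < size (Ps i)) msize (Ps i)`_k.
have hd i k : (msize (Ps i)`_k <= d.+1)%N.
  apply: leq_trans (leqnSn d); case: (ltnP k (size (Ps i))) => hk.
    apply: leq_trans (leq_bigmax_cond i isT).
    exact: (leq_bigmax_cond (Ordinal hk) isT).
  by rewrite nth_default // msize0.
pose Ga : 'I_(cdim n d) -> {poly K} := fun k =>
  \poly_(l < size (Ps (enum_val k).1)) ((Ps (enum_val k).1)`_l)@_((enum_val k).2).
have hGa t y i : evC (fun k => (Ga k).[t]) y i = (map_poly (meval y) (Ps i)).[t].
  rewrite /evC /map_poly horner_poly.
  under eq_bigr do rewrite /Ga enum_rankK /= horner_poly mulr_suml.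
  rewrite exchange_big /=; apply: eq_bigr => l _.
  rewrite (meval_bound y (hd i l)) mulr_suml; apply: eq_bigr => mm _.
  by rewrite mulrAC.
have hEt t : @Etilde K n X E d (fun k => (Ga k).[t]).
  have [h [Eh hh]] := hlin 1 t Eid Eg.
  exists h; split => // y Xy; apply: functional_extensionality => i.
  rewrite hGa key pev_horner -(psiphi_i i (EX Eh Xy)) (hh y Xy).
  by apply: meval_eq => j; rewrite lin_horner mul1r (hGp y Xy) mulrC.
exists d, (fun k => (Ga k).[0]), (fun k => (Ga k)^`().[0]); split; [|split].
- move=> y Xy; apply: functional_extensionality => i.
  rewrite hGa key pev_horner -(psiphi_i i Xy).
  by apply: meval_eq => j; rewrite lin0.
- exact: (@curve_tangent K hK _ (@Etilde K n X E d) Ga hEt).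
apply: functional_extensionality => i.
pose Q := \sum_(mm : 'X_{1..n < d.+1}) (\prod_(j < n) x j ^+ (mm j)) *:
   Ga (enum_rank ((i, mm) : coordIdx n d)).
have hQ : Q = pev (lin (Phi x) (Phi (pm_eval Gp x))) (psi i).
  apply/eqP; rewrite -subr_eq0; apply/eqP; apply: (poly_all0 hK) => t.
  rewrite hornerD hornerN -key -hGa /Q horner_sum /evC; apply/eqP; rewrite subr_eq0; apply/eqP.
  by apply: eq_bigr => mm _; rewrite hornerZ mulrC.
have -> : evC (fun k => (Ga k)^`().[0]) x i = (Q^`()).[0].
  rewrite /Q raddf_sum horner_sum /evC; apply: eq_bigr => mm _.
  by rewrite /= derivZ hornerZ mulrC.
rewrite hQ -diffp_lin /dPsi (hGp x Xx) //.
Qed.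


Lemma Psi_line y u t : X y -> W y u ->
  Eorbit E y (fun i => (pev (lin (Phi y) u) (psi i)).[t]) /\
  Phi (fun i => (pev (lin (Phi y) u) (psi i)).[t]) = (fun j => Phi y j + u j * t).
Proof.
move=> Xy Wu; have Wz := W_lin 1 t Xy (W_self y) Wu.
have -> : (fun i => (pev (lin (Phi y) u) (psi i)).[t]) = Psi (fun j => 1 * Phi y j + t * u j).
  apply: functional_extensionality => i; rewrite pev_horner /pm_eval; apply: meval_eq => j.
  by rewrite lin_horner mul1r mulrC.
have [h1 h2] := W_Psi Xy Wz; split => //; rewrite h2.
by apply: functional_extensionality => j; rewrite mul1r mulrC.
Qed.

Lemma dPhi_dPsi y u : X y -> W y u -> forall j, dPhi y (dPsi (Phi y) u) j = u j.
Proof.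
move=> Xy Wu j.
pose G i := pev (lin (Phi y) u) (psi i).
have hH : pev G (phi j) = lin (Phi y) u j.
  apply/eqP; rewrite -subr_eq0; apply/eqP; apply: (poly_all0 hK) => t.
  rewrite hornerD hornerN pev_horner lin_horner.
  have [_ h2] := Psi_line t Xy Wu.
  have := congr1 (fun f => f j) h2; rewrite /pm_eval /= => ->.
  by rewrite subrr.
have := congr1 (fun p => (p^`()).[0]) hH; rewrite /= pev_deriv0 lin_deriv hornerC => <-.
apply: diffp_ext => i; last by rewrite /G -diffp_lin.
by rewrite /G pev_horner -(psiphi_i i Xy); apply: meval_eq => k; rewrite lin0.
Qed.

Definition Lset (l : 'I_m -> {mpoly K[n]}) := forall y, X y -> W y (pm_eval l y).

Definition Vpsi (l0 : 'I_m -> {mpoly K[n]}) : 'I_n -> {mpoly K[n]} :=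
  fun i => \sum_(k < m) mmap (@mpolyC n K) phi (mderiv k (psi i)) * l0 k.

Definition xi (l0 l : 'I_m -> {mpoly K[n]}) : 'I_m -> {mpoly K[n]} :=
  fun j => \sum_(i < n) mderiv i (l j) * Vpsi l0 i.

Lemma Vpsi_eval l0 y i : (Vpsi l0 i).@[y] = dPsi (Phi y) (pm_eval l0 y) i.
Proof.
rewrite /Vpsi /dPsi /diffp raddf_sum; apply: eq_bigr => k _.
by rewrite /= mevalM meval_comp.
Qed.

Lemma xi_eval l0 l y j : (xi l0 l j).@[y] = diffp (l j) y (dPsi (Phi y) (pm_eval l0 y)).
Proof.
rewrite /xi /diffp raddf_sum; apply: eq_bigr => i _.
by rewrite /= mevalM Vpsi_eval.
Qed.

Lemma xi_L l0 l : Lset l0 -> Lset l -> Lset (xi l0 l).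
Proof.
move=> L0 L y Xy; have [r [B [C [_ [_ hC]]]]] := W_mx Xy.
apply/hC/rvC0 => j'.
pose G i := pev (lin (Phi y) (pm_eval l0 y)) (psi i).
pose F := \sum_(j < m) C j j' *: pev G (l j).
have F0 : F = 0.
  apply: (poly_all0 hK) => t; rewrite /F horner_sum.
  have [ho _] := Psi_line t Xy (L0 y Xy).
  have Xp := orbit_X Xy ho.
  case: ho => h [Eh eh].
  have := L _ Xp; rewrite eh => /(W_sub Eh); rewrite -eh => /hC /rvC0 /(_ j') H.
  etransitivity; last exact: H.
  by apply: eq_bigr => j _; rewrite hornerZ pev_horner.
have H := congr1 (fun p => (p^`()).[0]) F0; rewrite /= deriv0 horner0 in H.
etransitivity; last exact: H.
rewrite /F raddf_sum horner_sum; apply: eq_bigr => j _.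
rewrite /= derivZ hornerZ pev_deriv0 /pm_eval xi_eval; congr (_ * _).
apply: diffp_ext => i; last by rewrite /G -diffp_lin.
by rewrite /G pev_horner -(psiphi_i i Xy); apply: meval_eq => k; rewrite lin0.
Qed.


Fixpoint Dl (Q : {mpoly K[m]}) (ls : seq ('I_m -> {mpoly K[n]})) : {mpoly K[n]} :=
  match ls with
  | [::] => mmap (@mpolyC n K) phi Q
  | l :: ls' => \sum_(j < m) l j * Dl (mderiv j Q) ls'
  end.

Fixpoint Dpt (Q : {mpoly K[m]}) (z : pt K m) (us : seq (pt K m)) : K :=
  match us with
  | [::] => Q.@[z]
  | u :: us' => \sum_(j < m) u j * Dpt (mderiv j Q) z us'
  end.

Definition evs (ls : seq ('I_m -> {mpoly K[n]})) y := map (fun l => pm_eval l y) ls.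

Lemma Dl_eval Q ls y : (Dl Q ls).@[y] = Dpt Q (Phi y) (evs ls y).
Proof.
elim: ls Q => [|l ls IH] Q /=; first by rewrite meval_comp.
rewrite raddf_sum; apply: eq_bigr => j _.
by rewrite /= mevalM IH.
Qed.

Fixpoint reps (f : ('I_m -> {mpoly K[n]}) -> ('I_m -> {mpoly K[n]}))
  (ls : seq ('I_m -> {mpoly K[n]})) : seq (seq ('I_m -> {mpoly K[n]})) :=
  match ls with
  | [::] => [::]
  | l :: ls' => (f l :: ls') :: map (cons l) (reps f ls')
  end.

Lemma diffDl f Q ls y v :
  (forall l j, diffp (l j) y v = (f l j).@[y]) ->
  diffp (Dl Q ls) y v =
    Dpt Q (Phi y) (rcons (evs ls y) (dPhi y v)) +
    \sum_(ls' <- reps f ls) (Dl Q ls').@[y].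
Proof.
move=> hf; elim: ls Q => [|l ls IH] Q /=.
  rewrite big_nil addr0 diffp_comp /diffp; apply: eq_bigr => j _.
  by rewrite /dPhi /diffp mulrC.
rewrite diffp_sum big_cons big_map.
have eB : (Dl Q (f l :: ls)).@[y] = \sum_(j < m) (f l j).@[y] * (Dl (mderiv j Q) ls).@[y].
  by rewrite /= raddf_sum; apply: eq_bigr => j _; rewrite /= mevalM.
have eC : \sum_(ls' <- reps f ls) (Dl Q (l :: ls')).@[y] =
    \sum_(j < m) (l j).@[y] * \sum_(ls' <- reps f ls) (Dl (mderiv j Q) ls').@[y].
  under eq_bigr do rewrite /= raddf_sum.
  rewrite exchange_big /=; apply: eq_bigr => j _; rewrite mulr_sumr.
  by apply: eq_bigr => ls' _; rewrite /= mevalM.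
rewrite eB eC /= -!big_split /=; apply: eq_bigr => j _.
rewrite diffpM IH hf /pm_eval; ring.
Qed.


Fixpoint allP (T : Type) (P : T -> Prop) (s : seq T) : Prop :=
  match s with [::] => True | a :: s' => P a /\ allP P s' end.

Lemma allP_sum0 (T : Type) (s : seq T) (F : T -> K) :
  allP (fun a => F a = 0) s -> \sum_(a <- s) F a = 0.
Proof. by elim: s => [|a s IH] /=; rewrite ?big_nil ?big_cons // => [[-> /IH ->]]; rewrite addr0. Qed.

Lemma allP_rcons (T : Type) (P : T -> Prop) s a : allP P (rcons s a) -> allP P s /\ P a.
Proof. by elim: s => [|b s IH] /=; [case | case=> hb /IH []]. Qed.

Lemma allP_impl (T : Type) (P1 P2 : T -> Prop) s : (forall a, P1 a -> P2 a) -> allP P1 s -> allP P2 s.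
Proof. by move=> h; elim: s => [|a s IH] //= [/h ? /IH ?]. Qed.

Lemma reps_prop l0 ls : Lset l0 -> allP Lset ls ->
  allP (fun ls' => size ls' = size ls /\ allP Lset ls') (reps (xi l0) ls).
Proof.
move=> L0; elim: ls => [|l ls IH] //= [Ll Lls]; split.
  by split => //; split => //; exact: xi_L.
have := IH Lls; elim: (reps (xi l0) ls) => [|a s IH2] //= [[sa La] /IH2 H]; split => //.
by split; [rewrite sa | split].
Qed.

Lemma claim (Y : pt K n -> Prop) q :
  (forall y, Y y -> X y) -> Dinvariant (DE X E) Y -> (forall y, Y y -> q.@[y] = 0) ->
  forall k ls, size ls = k -> allP Lset ls -> forall y, Y y ->
    (Dl (mmap (@mpolyC m K) psi q) ls).@[y] = 0.
Proof.
move=> YX Dinv hq; elim=> [|k IH] ls.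
  move/size0nil => -> _ y Yy /=; rewrite meval_comp meval_comp -(hq y Yy).
  by apply: meval_eq => i; rewrite /pm_eval; apply: psiphi_i; exact: YX.
case/lastP: ls => [//|ls0 l0]; rewrite size_rcons => -[sz] /(@allP_rcons _ Lset) [L0s L0] y Yy.
have Xy := YX y Yy.
pose v := dPsi (Phi y) (pm_eval l0 y).
have Tv : tangent Y y v by apply: (Dinv y Yy); apply: dPsi_D => //; exact: L0.
have := Tv _ (IH ls0 sz L0s).
rewrite (@diffDl (xi l0)); last by move=> l j; rewrite xi_eval.
rewrite allP_sum0 ?addr0; last first.
  apply: allP_impl (reps_prop L0 L0s) => ls' [s' L'].
  by apply: IH => //; rewrite s'.
have -> : dPhi y v = pm_eval l0 y.
  by apply: functional_extensionality => j; rewrite /v dPhi_dPsi //; exact: L0.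
by rewrite Dl_eval /evs map_rcons.
Qed.


Fixpoint DP (G : 'I_m -> {poly K}) (Q : {mpoly K[m]}) (us : seq (pt K m)) : {poly K} :=
  match us with
  | [::] => pev G Q
  | u :: us' => \sum_(j < m) (u j)%:P * DP G (mderiv j Q) us'
  end.

Lemma DP_deriv z w Q k : (DP (lin z w) Q (nseq k w))^`() = DP (lin z w) Q (nseq k.+1 w).
Proof.
elim: k Q => [|k IH] Q /=.
  rewrite chain_rule; apply: eq_bigr => j _; rewrite lin_deriv mulrC.
  by [].
rewrite raddf_sum; apply: eq_bigr => j _.
by rewrite /= !mul_polyC derivZ IH.
Qed.

Lemma DP_h0 z w Q us : (DP (lin z w) Q us).[0] = Dpt Q z us.
Proof.
elim: us Q => [|u us IH] Q /=.
  by rewrite pev_horner; apply: meval_eq => j; rewrite lin0.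
rewrite horner_sum; apply: eq_bigr => j _.
by rewrite hornerM hornerC IH.
Qed.

Lemma pev_derivn z w Q k : (pev (lin z w) Q)^`(k) = DP (lin z w) Q (nseq k w).
Proof. by elim: k => [|k IH]; rewrite ?derivn0 // derivnS IH DP_deriv. Qed.

Lemma taylor0 z w Q : (forall k, Dpt Q z (nseq k w) = 0) -> Q.@[fun j => z j + w j] = 0.
Proof.
move=> h.
have P0 : pev (lin z w) Q = 0.
  apply/polyP => k; rewrite coef0.
  have := h k; rewrite -(DP_h0 z w) -pev_derivn horner_coef0 coef_derivn addn0 ffactnn.
  move/eqP; rewrite -mulr_natr mulf_eq0 => /orP [/eqP //|].
  by move/pcharf0P: hK => ->; rewrite eqn0Ngt fact_gt0.
have := congr1 (fun p => p.[1]) P0; rewrite /= horner0 pev_horner => <-.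
by apply: meval_eq => j; rewrite lin_horner mulr1.
Qed.

Lemma stable (Y : pt K n -> Prop) : subvar X Y -> Dinvariant (DE X E) Y -> Estable E Y.
Proof.
move=> [[PY hPY] YX] Dinv g Eg y Yy; apply/hPY => p Pp.
have hq : forall y', Y y' -> p.@[y'] = 0 by move=> y' /hPY; apply.
have Xy := YX y Yy.
have [Gp hGp] := Emor Eg.
pose l := fun j => mmap (@mpolyC n K) Gp (phi j) - phi j.
have hl y' : X y' -> pm_eval l y' = fun j => 1 * Phi (g y') j + (-1) * Phi y' j.
  move=> Xy'; apply: functional_extensionality => j.
  by rewrite /pm_eval /l mevalB meval_comp (hGp y' Xy') mul1r mulN1r.
have Ll : Lset l.
  move=> y' Xy'; rewrite hl //; apply: W_lin => //; last exact: W_self.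
  by exists g.
have Lk k : allP Lset (nseq k l) by elim: k => [|k IH] //=.
have Xg := EX Eg Xy.
have H := @taylor0 (Phi y) (pm_eval l y) (mmap (@mpolyC m K) psi p).
rewrite meval_comp in H; rewrite -H.
  apply: meval_eq => i; rewrite /pm_eval -(psiphi_i i Xg); apply: meval_eq => j.
  have := congr1 (fun f => f j) (hl y Xy); rewrite /pm_eval /= => ->.
  by rewrite mul1r mulN1r addrC subrK.
move=> k; have := @claim Y p YX Dinv hq k (nseq k l) (size_nseq _ _) (Lk k) y Yy.
by rewrite Dl_eval /evs map_nseq.
Qed.


Lemma rv_inj (N : nat) (z1 z2 : pt K N) : rv z1 = rv z2 -> z1 = z2.
Proof.
move=> e; apply: functional_extensionality => j.
by have := congr1 (fun M : 'rV_N => M 0 j) e; rewrite /= !mxE.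
Qed.

Lemma orbit_closed x : zclosed X -> X x -> zclosed (Eorbit E x).
Proof.
move=> [PX hPX] Xx; have [r [B [C [_ [_ hC]]]]] := W_mx Xx.
exists (fun p => PX p \/ exists j, p = \sum_(k < m) C k j *: phi k) => y.
rewrite orbit_W // hC rvC0 hPX; split.
  move=> [hX hW] p [Pp|[j ->]]; first exact: hX.
  by rewrite meval_sumZ; apply: hW.
move=> h; split.
  by move=> p Pp; apply: h; left.
by move=> j; rewrite -meval_sumZ; apply: h; right; exists j.
Qed.

Lemma orbit_affine x : X x -> isAffineSpace (Eorbit E x).
Proof.
move=> Xx; have [r [B [C [fB [hB _]]]]] := W_mx Xx.
pose P := pinvmx B.
pose ell : 'I_m -> {mpoly K[r]} := fun j => \sum_(k < r) B k j *: 'X_k.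
have hell t : rv (pm_eval ell t) = rv t *m B.
  apply/matrixP => i j; rewrite ord1 !mxE /ell /pm_eval meval_sumZ.
  by apply: eq_bigr => k _; rewrite mevalXU mxE mulrC.
have Well t : W x (pm_eval ell t) by apply/hB; exists (rv t).
exists r, (fun k => \sum_(j < m) P j k *: phi j), (fun i => mmap (@mpolyC r K) ell (psi i)).
have hbeta t : pm_eval (fun i => mmap (@mpolyC r K) ell (psi i)) t = Psi (pm_eval ell t).
  by apply: functional_extensionality => i; rewrite /pm_eval meval_comp.
have halpha y : rv (pm_eval (fun k => \sum_(j < m) P j k *: phi j) y) = rv (Phi y) *m P.
  apply/matrixP => i k; rewrite ord1 !mxE /pm_eval meval_sumZ.
  by apply: eq_bigr => j _; rewrite mulrC; congr (_ * _); rewrite /rv mxE.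
split; [|split].
- by move=> t; rewrite hbeta; case: (W_Psi Xx (Well t)).
- move=> t; apply: rv_inj; rewrite halpha hbeta; case: (W_Psi Xx (Well t)) => _ ->.
  by rewrite hell /P mulmxKp.
- move=> y Oy; have [Xy Wy] := (orbit_W y Xx).1 Oy.
  rewrite hbeta.
  have -> : pm_eval ell (pm_eval (fun k => \sum_(j < m) P j k *: phi j) y) = Phi y.
    apply: rv_inj; rewrite hell halpha /P mulmxKpV //.
    by case/hB: Wy => t' ->; exact: submxMl.
  exact: hpsiphi.
Qed.


Lemma main_part : zclosed X ->
  (forall x, X x -> IsM X (DE X E) x (Eorbit E x)) /\
  (forall x, X x -> zclosed (Eorbit E x) /\ isAffineSpace (Eorbit E x)) /\
  (forall x, X x -> forall M, IsM X (DE X E) x M ->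
     (forall v, tangent M x v <-> tangent (Eorbit E x) x v) /\
     (forall v, tangent (Eorbit E x) x v <-> DE X E x v)) /\
  (forall Y, subvar X Y -> (Dinvariant (DE X E) Y <-> Estable E Y)).
Proof.
move=> hX.
have isM x : X x -> IsM X (DE X E) x (Eorbit E x).
  move=> Xx; split; [split|split; [|split]].
  - exact: orbit_closed.
  - by move=> y; apply: orbit_X.
  - move=> y Oy v Dv; apply: tangent_mono (D_T (orbit_X Xx Oy) Dv).
    by move=> z; apply: orbit_sub.
  - by exists (fun u => u); split => //; exact: Eid.
  - move=> Y sY DY Yx y [f [Ef ->]]; exact: (stable sY DY Ef Yx).
split => //; split.
  by move=> x Xx; split; [exact: orbit_closed | exact: orbit_affine].
split.
  move=> x Xx M [sM [DM [Mx minM]]]; have [sO [DO [Ox minO]]] := isM x Xx.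
  have eMO y : M y <-> Eorbit E x y.
    by split; [apply: minM | apply: minO].
  split=> v; first by split; apply: tangent_mono => y /eMO.
  split; last exact: D_T.
  move=> hT; have [hW hv] := T_orb_sub Xx hT.
  have -> : v = dPsi (Phi x) (dPhi x v) by apply: functional_extensionality.
  exact: dPsi_D.
move=> Y sY; split; first exact: stable.
move=> hst y Yy v Dv.
apply: tangent_mono (D_T (sY.2 y Yy) Dv) => z [f [Ef ->]]; exact: hst.
Qed.

End Main.

End Aux.

Theorem theorem3p3p2 (K : closedFieldType) (hK : [pchar K] =i pred0)
  (n : nat) (X : pt K n -> Prop) (E : (pt K n -> pt K n) -> Prop) :
  zclosed X -> End_semisubgroup X E -> End_closed X E -> linear_semigroup X E ->
  (forall x, X x -> IsM X (DE X E) x (Eorbit E x)) /\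
  (forall x, X x -> zclosed (Eorbit E x) /\ isAffineSpace (Eorbit E x)) /\
  (forall x, X x -> forall M, IsM X (DE X E) x M ->
     (forall v, tangent M x v <-> tangent (Eorbit E x) x v) /\
     (forall v, tangent (Eorbit E x) x v <-> DE X E x v)) /\
  (forall Y, subvar X Y -> (Dinvariant (DE X E) Y <-> Estable E Y)).
Proof.
move=> hX hE _ [m [phi [psi [_ [hpsiphi hlin]]]]].
exact: (Aux.main_part hK hE hpsiphi hlin hX).
Qed.
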